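(* Let $\mathbb{H}$ be a real Hilbert space (of dimension at least $2$) and let $\mathbb{X},\mathbb{Y}$ be two-dimensional strictly convex smooth real Banach spaces. Let $T$ be a rank one operator either in $\mathbb{L}(\mathbb{H},\mathbb{Y})$ or in $\mathbb{L}(\mathbb{X},\mathbb{H})$, with $\|T\|=1$. If $x\in M_T$ is such that $(x,Tx)$ is not a CPP, then $T$ is an extreme contraction.
   Context: $M_T=\{x \text{ in the unit sphere of the domain}:\|Tx\|=\|T\|\}$. A norm one operator is an extreme contraction if it is an extreme point of the closed unit ball of the space of bounded linear operators between the given spaces. $B(x,r)=\{u:\|u-x\|<r\}$. $x\perp_B y$ means $\|x+\lambda y\|\ge\|x\|$ for all real $\lambda$; $x^\perp=\{y:x\perp_By\}$. For $x$ in the unit sphere $S_{\mathbb{U}}$ of $\mathbb{U}$ and $y\in S_{\mathbb{V}}$, $(x,y)$ is a CPP if there exist $r>0,\mu>0$ such that for all $z\in x^\perp\cap S_{\mathbb{U}}$, all $w\in y^\perp\cap S_{\mathbb{V}}$ and all $a,b\in\mathbb{R}$, $ax+bz\in B(x,r)\cap S_{\mathbb{U}}$ implies $\|ay+b\mu w\|\le1$. *)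

(* Defs.v *)
From HB Require Import structures.
From mathcomp Require Import all_boot all_order all_algebra.
From mathcomp Require Import all_classical all_reals all_analysis.
Set Implicit Arguments. Unset Strict Implicit. Unset Printing Implicit Defensive.
Import Order.TTheory GRing.Theory Num.Theory.
Import numFieldNormedType.Exports.
Local Open Scope classical_set_scope.
Local Open Scope ring_scope.

Section Defs.
Variable R : realType.

Definition is_linear (U V : normedModType R) (T : U -> V) : Prop :=
  forall (a : R) (u v : U), T (a *: u + v) = a *: T u + T v.

Definition bounded_linear (U V : normedModType R) (T : U -> V) : Prop :=
  is_linear T /\ exists C : R, forall x, `|T x| <= C * `|x|.

Definition opnorm (U V : normedModType R) (T : U -> V) : R :=
  sup [set `|T x| | x in [set x : U | `|x| = 1]].

Definition rank_one (U V : normedModType R) (T : U -> V) : Prop :=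
  (exists x, T x != 0) /\
  exists v : V, forall x, exists c : R, T x = c *: v.

Definition norm_attainment_set (U V : normedModType R) (T : U -> V) : set U :=
  [set x | `|x| = 1 /\ `|T x| = opnorm T].

Definition extreme_contraction (U V : normedModType R) (T : U -> V) : Prop :=
  opnorm T = 1 /\
  forall (A B : U -> V) (t : R),
    bounded_linear A -> bounded_linear B ->
    opnorm A <= 1 -> opnorm B <= 1 ->
    0 < t < 1 -> T = (fun x => t *: A x + (1 - t) *: B x) ->
    A = T /\ B = T.

Definition oball (U : normedModType R) (x : U) (r : R) : set U :=
  [set u | `|u - x| < r].

Definition bj_orth (U : normedModType R) (x y : U) : Prop :=
  forall lambda : R, `|x| <= `|x + lambda *: y|.

Definition sphere (U : normedModType R) : set U := [set x | `|x| = 1].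

Definition CPP (U V : normedModType R) (x : U) (y : V) : Prop :=
  exists r mu : R, 0 < r /\ 0 < mu /\
    forall (z : U) (w : V) (a b : R),
      bj_orth x z -> `|z| = 1 -> bj_orth y w -> `|w| = 1 ->
      (a *: x + b *: z) \in oball x r `&` @sphere U ->
      `|a *: y + (b * mu) *: w| <= 1.

Definition strictly_convex (U : normedModType R) : Prop :=
  forall x y : U, `|x| = 1 -> `|y| = 1 -> x != y -> `|x + y| < 2.

Definition norming_functional (U : normedModType R) (x : U) (f : U -> R) :=
  (forall (a : R) (u v : U), f (a *: u + v) = a * f u + f v) /\
  (forall y, `|f y| <= `|y|) /\ f x = 1.

Definition smooth (U : normedModType R) : Prop :=
  forall x : U, `|x| = 1 ->
    forall f g, norming_functional x f -> norming_functional x g -> f = g.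

Definition lin_indep2 (U : normedModType R) (u v : U) : Prop :=
  forall a b : R, a *: u + b *: v = 0 -> a = 0 /\ b = 0.

Definition dim_two (U : normedModType R) : Prop :=
  exists u v : U, lin_indep2 u v /\
    forall x : U, exists a b : R, x = a *: u + b *: v.

(* real Hilbert space structure on a complete normed space: an inner product
   inducing the norm *)
Definition inner_product_for (H : normedModType R) (ip : H -> H -> R) : Prop :=
  (forall x y, ip x y = ip y x) /\
  (forall (a : R) (x y z : H), ip (a *: x + y) z = a * ip x z + ip y z) /\
  (forall x, ip x x = `|x| ^+ 2).

End Defs.

(* Main.v *)
Require Import Defs.
From HB Require Import structures.
From mathcomp Require Import all_boot all_order all_algebra.
From mathcomp Require Import all_classical all_reals all_analysis.
From mathcomp Require Import ring lra.
Import Order.TTheory GRing.Theory Num.Theory.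
Import numFieldNormedType.Exports.
Local Open Scope classical_set_scope.
Local Open Scope ring_scope.

Module Aux.
Set Implicit Arguments. Unset Strict Implicit. Unset Printing Implicit Defensive.


Section Gen.
Variable R : realType.

Lemma lin0 (U V : normedModType R) (A : U -> V) : is_linear A -> A 0 = 0.
Proof.
move=> L; have := L 1 0 0; rewrite !scale1r addr0 => H.
have := congr1 (fun z => z - A 0) H; rewrite /= addrK subrr.
by move=> ->.
Qed.

Lemma linZ (U V : normedModType R) (A : U -> V) (L : is_linear A) a u : A (a *: u) = a *: A u.
Proof. by have := L a u 0; rewrite addr0 lin0 // addr0. Qed.

Lemma linD (U V : normedModType R) (A : U -> V) (L : is_linear A) u v : A (u + v) = A u + A v.
Proof. by have := L 1 u v; rewrite !scale1r. Qed.

Lemma linC (U V : normedModType R) (A : U -> V) (L : is_linear A) a b u v :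
  A (a *: u + b *: v) = a *: A u + b *: A v.
Proof. by rewrite (linD L) !(linZ L). Qed.

Lemma comb (U : normedModType R) (u1 u2 : U) a b p q r s :
  a *: (p *: u1 + q *: u2) + b *: (r *: u1 + s *: u2)
  = (a * p + b * r) *: u1 + (a * q + b * s) *: u2.
Proof.
rewrite !scalerDr !scalerA !scalerDl.
by rewrite addrACA.
Qed.

Lemma opnorm_le1 (U V : normedModType R) (A : U -> V) :
  bounded_linear A -> opnorm A <= 1 -> forall h, `|A h| <= `|h|.
Proof.
move=> [L [C HC]] nA h.
have [->|h0] := eqVneq h 0; first by rewrite lin0 // !normr0.
have hp : 0 < `|h| by rewrite normr_gt0.
pose e := `|h|^-1 *: h.
have ne : `|e| = 1 by rewrite normrZ ger0_norm ?invr_ge0 // mulVf // gt_eqF.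
have : `|A e| <= 1.
  apply: le_trans nA; apply: ub_le_sup; last by exists e.
  exists C => _ [x /= x1 <-]; by rewrite -[C]mulr1 -x1.
rewrite (linZ L) normrZ ger0_norm ?invr_ge0 //.
by rewrite ler_pdivrMl // mulr1.
Qed.

Lemma bj_ge (U : normedModType R) (y w : U) c d :
  `|y| = 1 -> bj_orth y w -> `|c| <= `|c *: y + d *: w|.
Proof.
move=> ny bj.
have [->|c0] := eqVneq c 0; first by rewrite normr0.
have -> : c *: y + d *: w = c *: (y + (d / c) *: w).
  by rewrite scalerDr scalerA mulrC divfK.
rewrite normrZ -{1}[`|c|]mulr1 ler_wpM2l // -ny; exact: bj.
Qed.

Lemma indep_bj (U : normedModType R) (y w : U) :
  y != 0 -> w != 0 -> bj_orth y w -> lin_indep2 y w.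
Proof.
move=> y0 w0 bj c d H.
have [d0|d0] := eqVneq d 0.
  move: H; rewrite d0 scale0r addr0 => /eqP; rewrite scaler_eq0 (negbTE y0) orbF.
  by move/eqP.
exfalso.
have [c0|c0] := eqVneq c 0.
  move: H; rewrite c0 scale0r add0r => /eqP; rewrite scaler_eq0 (negbTE w0) orbF.
  by rewrite (negbTE d0).
have hw : w = (- (c / d)) *: y.
  apply: (scalerI d0); rewrite scalerA mulrN mulrCA mulfV // mulr1 scaleNr.
  by apply/eqP; rewrite -addr_eq0 addrC H.
have := bj (d / c); rewrite hw scalerA mulrN mulrA divfK // mulfV // scaleN1r subrr normr0.
by rewrite normr_le0 (negbTE y0).
Qed.

Lemma span2 (U : normedModType R) (y w : U) : dim_two U ->
  y != 0 -> w != 0 -> bj_orth y w -> forall v, exists a b, v = a *: y + b *: w.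
Proof.
move=> [u1 [u2 [I Sp]]] y0 w0 bj.
have I2 := indep_bj y0 w0 bj.
have [p [q ey]] := Sp y; have [r [s ew]] := Sp w.
pose D := p * s - q * r.
have D0 : D != 0.
  apply/negP => /eqP D0.
  have h1 : s *: y + (- q) *: w = 0.
    rewrite ey ew comb.
    have -> : s * p + - q * r = 0 by rewrite -D0 /D; ring.
    have -> : s * q + - q * s = 0 by ring.
    by rewrite !scale0r addr0.
  have h2 : (- r) *: y + p *: w = 0.
    rewrite ey ew comb.
    have -> : - r * p + p * r = 0 by ring.
    have -> : - r * q + p * s = 0 by rewrite -D0 /D; ring.
    by rewrite !scale0r addr0.
  have [s0 q0] := I2 _ _ h1; have [r0 p0] := I2 _ _ h2.
  move: y0; rewrite ey p0 (_ : q = 0); last by rewrite -[q]opprK q0 oppr0.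
  by rewrite !scale0r addr0 eqxx.
have e1 : u1 = (s / D) *: y + (- q / D) *: w.
  rewrite ey ew comb.
  have -> : s / D * p + - q / D * r = 1 by rewrite /D; field.
  have -> : s / D * q + - q / D * s = 0 by field.
  by rewrite scale1r scale0r addr0.
have e2 : u2 = (- r / D) *: y + (p / D) *: w.
  rewrite ey ew comb.
  have -> : - r / D * p + p / D * r = 0 by field.
  have -> : - r / D * q + p / D * s = 1 by rewrite /D; field.
  by rewrite scale1r scale0r add0r.
move=> v; have [m [n ->]] := Sp v.
rewrite e1 e2 comb; by eexists; eexists.
Qed.


Lemma notCPP (U V : normedModType R) (x : U) (y : V) : ~ CPP x y ->
  forall r mu : R, 0 < r -> 0 < mu -> exists z w (a b : R),
    [/\ bj_orth x z, `|z| = 1, bj_orth y w, `|w| = 1 &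
      `|a *: x + b *: z| = 1 /\ 1 < `|a *: y + (b * mu) *: w|].
Proof.
move=> nC r mu r0 mu0; apply: contrapT => Hn; apply: nC.
exists r, mu; split => //; split => // z w a b h1 h2 h3 h4.
rewrite in_setE => -[_ h5].
rewrite leNgt; apply/negP => h6; apply: Hn.
by exists z, w, a, b; split.
Qed.

Lemma sconv (U : normedModType R) (p q y : U) (t : R) : strictly_convex U ->
  `|p| <= 1 -> `|q| <= 1 -> 0 < t < 1 -> `|y| = 1 -> y = t *: p + (1 - t) *: q ->
  p = y /\ q = y.
Proof.
move=> sc np nq /andP[t0 t1] ny ey.
have tri : `|y| <= t * `|p| + (1 - t) * `|q|.
  rewrite ey; apply: le_trans (ler_normD _ _) _.
  by rewrite !normrZ (ger0_norm (ltW t0)) ger0_norm // subr_ge0 ltW.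
have np1 : `|p| = 1.
  apply/eqP; rewrite eq_le np /=; rewrite leNgt; apply/negP => h.
  have : t * `|p| < t * 1 by rewrite ltr_pM2l.
  have : (1 - t) * `|q| <= (1 - t) * 1 by rewrite ler_wpM2l // subr_ge0 ltW.
  lra.
have nq1 : `|q| = 1.
  apply/eqP; rewrite eq_le nq /=; rewrite leNgt; apply/negP => h.
  have : (1 - t) * `|q| < (1 - t) * 1 by rewrite ltr_pM2l // subr_gt0.
  rewrite np1 in tri; lra.
have [epq|npq] := eqVneq p q.
  by move: ey; rewrite -epq -scalerDl addrC subrK scale1r => ->.
have h2 := sc p q np1 nq1 npq.
suff : `|y| < 1 by rewrite ny ltxx.
have [th|th] := lerP t (1/2).
  have -> : y = t *: (p + q) + (1 - 2 * t) *: q.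
    rewrite ey scalerDr -addrA -scalerDl; congr (_ + _ *: _); ring.
  apply: le_lt_trans (ler_normD _ _) _.
  rewrite !normrZ (ger0_norm (ltW t0)) (@ger0_norm _ (1 - 2 * t)) ?nq1; last lra.
  have : t * `|p + q| < t * 2 by rewrite ltr_pM2l.
  lra.
have -> : y = (1 - t) *: (p + q) + (2 * t - 1) *: p.
  rewrite ey scalerDr addrAC -scalerDl; congr (_ *: _ + _); ring.
apply: le_lt_trans (ler_normD _ _) _.
rewrite !normrZ (@ger0_norm _ (1 - t)) ?(@ger0_norm _ (2 * t - 1)) ?np1; try lra.
have : (1 - t) * `|p + q| < (1 - t) * 2 by rewrite ltr_pM2l // subr_gt0.
lra.
Qed.

Lemma coordf (U : normedModType R) (x z : U) : dim_two U -> `|x| = 1 -> z != 0 ->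
  bj_orth x z -> exists f : U -> R, [/\ norming_functional x f, f z = 0 &
     forall h, exists d, h = f h *: x + d *: z].
Proof.
move=> d2 nx z0 bj.
have x0 : x != 0 by rewrite -normr_eq0 nx oner_eq0.
have I := indep_bj x0 z0 bj.
have Sp := span2 d2 x0 z0 bj.
have Sp' : forall h, exists a, exists b, h = a *: x + b *: z by [].
have [f Hf] := choice Sp'.
have uniq : forall c d c' d', c *: x + d *: z = c' *: x + d' *: z -> c = c' /\ d = d'.
  move=> c d c' d' e.
  have : (c - c') *: x + (d - d') *: z = 0.
    by rewrite !scalerBl addrACA e addrACA !subrr addr0.
  by move/I => [/eqP]; rewrite subr_eq0 => /eqP -> /eqP; rewrite subr_eq0 => /eqP ->.
exists f; split.
- split; [|split].
  + move=> a u v; have [du eu] := Hf u; have [dv ev] := Hf v.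
    have [d ed] := Hf (a *: u + v).
    have : a *: u + v = (a * f u + f v) *: x + (a * du + dv) *: z.
      rewrite [in LHS]eu [in LHS]ev -[f v *: x + dv *: z]scale1r comb.
      by rewrite !mul1r.
    by rewrite {1}ed => /uniq [].
  + move=> h; have [d ed] := Hf h; rewrite {2}ed; exact: bj_ge.
  + have [d ed] := Hf x.
    have : 1 *: x + 0 *: z = f x *: x + d *: z by rewrite scale1r scale0r addr0 -ed.
    by case/uniq.
- have [d ed] := Hf z.
  have : 0 *: x + 1 *: z = f z *: x + d *: z by rewrite scale1r scale0r add0r -ed.
  by case/uniq.
- move=> h; exact: Hf.
Qed.

End Gen.


Section Hil.
Variables (R : realType) (H : normedModType R) (ip : H -> H -> R).
Hypothesis Hip : inner_product_for ip.

Lemma ipDl x y z : ip (x + y) z = ip x z + ip y z.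
Proof. by case: Hip => _ [L _]; have := L 1 x y z; rewrite scale1r mul1r. Qed.

Lemma ip0l z : ip 0 z = 0.
Proof.
have := ipDl 0 0 z; rewrite addr0 => e.
by have := congr1 (fun u => u - ip 0 z) e; rewrite /= addrK subrr => ->.
Qed.

Lemma ipZl a x z : ip (a *: x) z = a * ip x z.
Proof. by case: Hip => _ [L _]; have := L a x 0 z; rewrite addr0 ip0l addr0. Qed.

Lemma ipC x y : ip x y = ip y x.
Proof. by case: Hip. Qed.

Lemma ipn x : ip x x = `|x| ^+ 2.
Proof. by case: Hip => _ [_ ->]. Qed.

Lemma ipcomb a b c d p q r s :
  ip (a *: p + b *: q) (c *: r + d *: s) =
  a * c * ip p r + a * d * ip p s + b * c * ip q r + b * d * ip q s.
Proof.
rewrite !ipDl !ipZl ![ip _ (_ + _)]ipC !ipDl !ipZl.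
rewrite (ipC r p) (ipC s p) (ipC r q) (ipC s q); ring.
Qed.

Lemma bj_ip x z : `|x| = 1 -> `|z| = 1 -> bj_orth x z -> ip x z = 0.
Proof.
move=> nx nz bj.
have := bj (- ip x z).
have e : `|x + (- ip x z) *: z| ^+ 2 = 1 - ip x z ^+ 2.
  rewrite -ipn -[x in ip (x + _)]scale1r -[x in ip _ (x + _)]scale1r ipcomb.
  rewrite !ipn nx nz (ipC z x); ring.
rewrite nx => h.
have h2 : 1 <= `|x + (- ip x z) *: z| ^+ 2 by rewrite -[1](expr1n _ 2) lerXn2r // ?nnegrE.
have : ip x z ^+ 2 <= 0 by lra.
by rewrite le_eqVlt ltNge sqr_ge0 orbF sqrf_eq0 => /eqP.
Qed.

Lemma unit_comb x u a b : `|x| = 1 -> `|u| = 1 -> ip x u = 0 ->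
  `|a *: x + b *: u| ^+ 2 = a ^+ 2 + b ^+ 2.
Proof.
move=> nx nu o; rewrite -ipn ipcomb !ipn nx nu o (ipC u x) o; ring.
Qed.

Lemma sq1 (N : R) : 0 <= N -> N ^+ 2 = 1 -> N = 1.
Proof. by move=> N0 e; apply/eqP; rewrite -sqrp_eq1 // e. Qed.

End Hil.


Section P1.
Variables (R : realType) (H Y : normedModType R) (ip : H -> H -> R).
Hypothesis Hip : inner_product_for ip.
Hypothesis d2Y : dim_two Y.
Variables (x : H) (y : Y).
Hypotheses (nx : `|x| = 1) (ny : `|y| = 1) (nC : ~ CPP x y).

Lemma key1_unit (A : H -> Y) : is_linear A -> (forall h, `|A h| <= `|h|) -> A x = y ->
  forall u, ip u x = 0 -> `|u| = 1 -> A u = 0.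
Proof.
move=> L Ale Ax u hu nu.
have [//|v0] := eqVneq (A u) 0; exfalso.
have mu0 : 0 < `|A u| by rewrite normr_gt0.
have [z [w [a [b [bxz nz byw nw [nab gt]]]]]] := notCPP nC ltr01 mu0.
have xz : ip x z = 0 := bj_ip Hip nx nz bxz.
have ab : a ^+ 2 + b ^+ 2 = 1 by rewrite -(unit_comb Hip a b nx nz xz) nab expr1n.
have xu : ip x u = 0 by rewrite (ipC Hip) hu.
have y0 : y != 0 by rewrite -normr_eq0 ny oner_eq0.
have w0 : w != 0 by rewrite -normr_eq0 nw oner_eq0.
have [al [be ev]] := span2 d2Y y0 w0 byw (A u).
have al0 : al = 0.
  have e1 : A (1 *: x + al *: u) = (1 + al * al) *: y + (al * be) *: w.
    rewrite (linC L) Ax ev.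
    have ey : y = 1 *: y + 0 *: w by rewrite scale1r scale0r addr0.
    rewrite {1}ey comb; congr (_ *: _ + _ *: _); ring.
  have h1 := bj_ge (1 + al * al) (al * be) ny byw; rewrite -e1 in h1.
  have h2 := Ale (1 *: x + al *: u).
  have h3 := unit_comb Hip 1 al nx nu xu.
  have h4 : 0 <= `|1 *: x + al *: u| by [].
  have h5 : 0 <= al * al by rewrite -expr2 sqr_ge0.
  rewrite ger0_norm in h1; last by lra.
  have h6 : al * al <= 0.
    move: h3; rewrite !expr2 mul1r => h3. nra.
  have : al * al = 0 by apply/le_anti; rewrite h6 h5.
  by move/eqP; rewrite mulf_eq0 orbb => /eqP.
move: ev; rewrite al0 scale0r add0r => ev.
have nv : `|A u| = `|be| by rewrite ev normrZ nw mulr1.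
rewrite nv in gt.
have fin : forall c, `|a *: y + (b * `|be|) *: w| = `|A (a *: x + c *: u)| -> c ^+ 2 = b ^+ 2 -> False.
  move=> c e c2; rewrite e in gt.
  have := Ale (a *: x + c *: u).
  have h3 := unit_comb Hip a c nx nu xu.
  rewrite c2 ab in h3.
  rewrite (sq1 (normr_ge0 _) h3); lra.
have [be0|be0] := lerP 0 be.
  apply: (fin b); last by [].
  by rewrite (linC L) Ax ev scalerA ger0_norm.
apply: (fin (- b)); last by rewrite sqrrN.
by rewrite (linC L) Ax ev scalerA ltr0_norm // mulrN mulNr.
Qed.

Lemma key1 (A : H -> Y) : is_linear A -> (forall h, `|A h| <= `|h|) -> A x = y ->
  forall h, A h = ip h x *: y.
Proof.
move=> L Ale Ax h.
pose c := ip h x; pose u := h - c *: x.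
have hu : ip u x = 0.
  rewrite /u -scaleN1r (ipDl Hip) (ipZl Hip) (ipZl Hip) (ipn Hip) nx /c; ring.
have Au : A u = 0.
  have [->|u0] := eqVneq u 0; first exact: lin0.
  have up : 0 < `|u| by rewrite normr_gt0.
  pose u1 := `|u|^-1 *: u.
  have : A u1 = 0.
    apply: (key1_unit L Ale Ax).
      by rewrite /u1 (ipZl Hip) hu mulr0.
    by rewrite /u1 normrZ ger0_norm ?invr_ge0 // mulVf // gt_eqF.
  rewrite /u1 (linZ L) => /eqP; rewrite scaler_eq0 invr_eq0 normr_eq0 (negbTE u0) /=.
  by move/eqP.
rewrite {1}(_ : h = c *: x + u); last by rewrite /u addrC subrK.
by rewrite (linD L) (linZ L) Au addr0 Ax.
Qed.

End P1.


Lemma Hsc (R : realType) (H : normedModType R) (ip : H -> H -> R) :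
  inner_product_for ip -> strictly_convex H.
Proof.
move=> Hip p q np nq pq.
have e1 : `|1 *: p + 1 *: q| ^+ 2 = 2 + 2 * ip p q.
  by rewrite -(ipn Hip) (ipcomb Hip) !(ipn Hip) np nq (ipC Hip q p); ring.
have e2 : `|1 *: p + (-1) *: q| ^+ 2 = 2 - 2 * ip p q.
  by rewrite -(ipn Hip) (ipcomb Hip) !(ipn Hip) np nq (ipC Hip q p); ring.
have h : 0 < `|1 *: p + (-1) *: q|.
  by rewrite normr_gt0 scale1r scaleN1r subr_eq0.
rewrite !scale1r in e1.
have h0 := normr_ge0 (p + q).
nra.
Qed.

Lemma fin_contra (R : realType) (p q r : R) : p ^+ 2 = r -> q ^+ 2 = r -> p <= 1 -> 0 <= p -> 1 < q -> False.
Proof. by move=> e1 e2 p1 p0 q1; nra. Qed.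

Section P2.
Variables (R : realType) (X H : normedModType R) (ip : H -> H -> R).
Hypothesis Hip : inner_product_for ip.
Hypotheses (d2X : dim_two X) (smX : smooth X).
Variables (x : X) (y : H).
Hypotheses (nx : `|x| = 1) (ny : `|y| = 1) (nC : ~ CPP x y).
Variables (z0 : X) (f : X -> R).
Hypotheses (nf : norming_functional x f) (fz0 : f z0 = 0)
  (spf : forall h, exists d, h = f h *: x + d *: z0) (nz0 : `|z0| = 1).

Lemma key2 (A : X -> H) : is_linear A -> (forall h, `|A h| <= `|h|) -> A x = y ->
  A z0 = 0.
Proof.
move=> L Ale Ax.
pose phi := fun h => ip (A h) y.
have nphi : norming_functional x phi.
  split; [|split].
  - by move=> a u v; rewrite /phi L (ipDl Hip) (ipZl Hip).
  - move=> h; rewrite /phi; set c := ip (A h) y.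
    have e : `|1 *: A h + (- c) *: y| ^+ 2 = `|A h| ^+ 2 - c ^+ 2.
      by rewrite -(ipn Hip (1 *: A h + _)) (ipcomb Hip) !(ipn Hip) ny (ipC Hip y (A h)) -/c; ring.
    have := sqr_ge0 `|1 *: A h + (- c) *: y|; rewrite e => h1.
    have h2 := Ale h; have h3 := normr_ge0 (A h).
    rewrite -(real_normK (num_real c)) in h1.
    have h4 := normr_ge0 c.
    nra.
  - by rewrite /phi Ax (ipn Hip) ny expr1n.
have ephi := smX nx nphi nf.
have Ay : forall h, ip (A h) y = f h by move=> h; rewrite -ephi.
have [//|v0] := eqVneq (A z0) 0; exfalso.
have mu0 : 0 < `|A z0| by rewrite normr_gt0.
have [z [w [a [b [bxz nz byw nw [nab gt]]]]]] := notCPP nC ltr01 mu0.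
have z0' : z != 0 by rewrite -normr_eq0 nz oner_eq0.
have [fz [nfz fzz _]] := coordf d2X nx z0' bxz.
have efz := smX nx nf nfz.
have fz_ : f z = 0 by rewrite efz.
have [d ed] := spf z; rewrite fz_ scale0r add0r in ed.
have d2 : d ^+ 2 = 1.
  apply/eqP; rewrite sqr_norm_eq1; apply/eqP.
  by move: nz; rewrite ed normrZ nz0 mulr1.
have hv : ip (A z0) y = 0 by rewrite Ay.
have hw : ip y w = 0 := bj_ip Hip ny nw byw.
have eA : A (a *: x + b *: z) = a *: y + (b * d) *: A z0.
  by rewrite (linC L) Ax ed (linZ L) scalerA.
have N1 : `|a *: y + (b * d) *: A z0| ^+ 2 = a ^+ 2 + b ^+ 2 * `|A z0| ^+ 2.
  rewrite -(ipn Hip (a *: y + _)) (ipcomb Hip) !(ipn Hip) ny (ipC Hip y (A z0)) hv.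
  have -> : b * d * (b * d) = b ^+ 2 by rewrite mulrACA -!expr2 d2 mulr1.
  ring.
have N2 : `|a *: y + (b * `|A z0|) *: w| ^+ 2 = a ^+ 2 + b ^+ 2 * `|A z0| ^+ 2.
  rewrite -(ipn Hip (a *: y + _)) (ipcomb Hip) !(ipn Hip) ny nw (ipC Hip w y) hw; ring.
have h1 := Ale (a *: x + b *: z); rewrite eA nab in h1.
have h2 := normr_ge0 (a *: y + (b * d) *: A z0).
have h3 := normr_ge0 (a *: y + (b * `|A z0|) *: w).
exact: (fin_contra N1 N2 h1 h2 gt).
Qed.

End P2.


Lemma part1 (R : realType) (H Y : normedModType R) (ip : H -> H -> R) :
  inner_product_for ip -> dim_two Y -> strictly_convex Y ->
  forall T : H -> Y, bounded_linear T -> opnorm T = 1 ->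
  forall x, norm_attainment_set T x -> ~ CPP x (T x) -> extreme_contraction T.
Proof.
move=> Hip d2Y scY T bT nT x [nx nTx] nC; rewrite nT in nTx.
split => // A B t bA bB nA nB t01 eT.
have AleA := opnorm_le1 bA nA; have AleB := opnorm_le1 bB nB.
have eTx : T x = t *: A x + (1 - t) *: B x := congr1 (fun f => f x) eT.
have a1 : `|A x| <= 1 by rewrite -nx.
have b1 : `|B x| <= 1 by rewrite -nx.
have [Ax Bx] := sconv scY a1 b1 t01 nTx eTx.
have KA := key1 Hip d2Y nx nTx nC bA.1 AleA Ax.
have KB := key1 Hip d2Y nx nTx nC bB.1 AleB Bx.
have KT : forall h, T h = ip h x *: T x.
  by move=> h; have -> := congr1 (fun f => f h) eT; rewrite /= (KA h) (KB h) -scalerDl addrC subrK scale1r.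

split; apply: funext => h.
- exact: (etrans (KA h) (esym (KT h))).
- exact: (etrans (KB h) (esym (KT h))).
Qed.



Lemma part2 (R : realType) (X H : normedModType R) (ip : H -> H -> R) :
  inner_product_for ip -> dim_two X -> smooth X ->
  forall T : X -> H, bounded_linear T -> opnorm T = 1 ->
  forall x, norm_attainment_set T x -> ~ CPP x (T x) -> extreme_contraction T.
Proof.
move=> Hip d2X smX T bT nT x [nx nTx] nC; rewrite nT in nTx.
have [z0 [w0 [a0 [b0 [bz0 nz0 _ _ _]]]]] := notCPP nC ltr01 ltr01.
have z00 : z0 != 0 by rewrite -normr_eq0 nz0 oner_eq0.
have [f [nf fz0 spf]] := coordf d2X nx z00 bz0.
split => // A B t bA bB nA nB t01 eT.
have AleA := opnorm_le1 bA nA; have AleB := opnorm_le1 bB nB.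
have eTx : T x = t *: A x + (1 - t) *: B x := congr1 (fun f => f x) eT.
have a1 : `|A x| <= 1 by rewrite -nx.
have b1 : `|B x| <= 1 by rewrite -nx.
have [Ax Bx] := sconv (Hsc Hip) a1 b1 t01 nTx eTx.
have Az := key2 Hip d2X smX nx nTx nC nf fz0 spf nz0 bA.1 AleA Ax.
have Bz := key2 Hip d2X smX nx nTx nC nf fz0 spf nz0 bB.1 AleB Bx.
have form : forall C : X -> H, is_linear C -> C x = T x -> C z0 = 0 ->
    forall h, C h = f h *: T x.
  move=> C L Cx Cz h; have [d ed] := spf h.
  by rewrite {1}ed (linC L) Cx Cz scaler0 addr0.
have KA := form A bA.1 Ax Az; have KB := form B bB.1 Bx Bz.
have KT : forall h, T h = f h *: T x.
  by move=> h; have -> := congr1 (fun f => f h) eT; rewrite /= (KA h) (KB h) -scalerDl addrC subrK scale1r.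
split; apply: funext => h.
- exact: (etrans (KA h) (esym (KT h))).
- exact: (etrans (KB h) (esym (KT h))).
Qed.

End Aux.
Import Aux.

Theorem mainTheorem6 (R : realType)
  (H : completeNormedModType R) (ip : H -> H -> R)
  (X Y : completeNormedModType R) :
  inner_product_for ip ->
  (exists u v : H, lin_indep2 u v) ->
  dim_two X -> strictly_convex X -> smooth X ->
  dim_two Y -> strictly_convex Y -> smooth Y ->
  (forall T : H -> Y,
     bounded_linear T -> rank_one T -> opnorm T = 1 ->
     forall x : H, norm_attainment_set T x -> ~ CPP x (T x) ->
     extreme_contraction T) /\
  (forall T : X -> H,
     bounded_linear T -> rank_one T -> opnorm T = 1 ->
     forall x : X, norm_attainment_set T x -> ~ CPP x (T x) ->
     extreme_contraction T).
Proof.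
move=> Hip _ d2X _ smX d2Y scY _; split.
- move=> T bT _ nT x Mx nC; exact: (part1 Hip d2Y scY bT nT Mx nC).
- move=> T bT _ nT x Mx nC; exact: (part2 Hip d2X smX bT nT Mx nC).
Qed.
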